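(* There is no nonzero finite-dimensional smooth genuine $k$-representation of $\widetilde G$.
   Context: Let $p$ be an odd prime and $k$ an algebraically closed field of characteristic $p$. Let $G=\mathrm{GL}_2(\mathbb{Q}_p)$, $v$ the $p$-adic valuation, $\mu_2=\{\pm1\}$, $\omega\colon\mathbb{Q}_p^\times\to\mathbb{F}_p^\times$, $x\mapsto (xp^{-v(x)}\bmod p)$, Hilbert symbol $(a,b)=\omega\big((-1)^{v(a)v(b)}b^{v(a)}/a^{v(b)}\big)^{(p-1)/2}$. For $g=\begin{pmatrix}a&b\\c&d\end{pmatrix}$ put $\mathfrak c(g)=c$ if $c\neq0$, $\mathfrak c(g)=d$ if $c=0$. The metaplectic cover $\widetilde G$ is the topological group $G\times\mu_2$ with $(g_1,\zeta_1)(g_2,\zeta_2)=(g_1g_2,\zeta_1\zeta_2\sigma(g_1,g_2))$, $\sigma(g_1,g_2)=\big(\mathfrak c(g_1g_2)/\mathfrak c(g_1),\ \det(g_1)\mathfrak c(g_1g_2)/\mathfrak c(g_2)\big)$. $\iota\colon\mu_2\to k^\times$ is the nontrivial character; a smooth representation is genuine if $\mu_2$ acts through $\iota$. *)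

(* Defs.v *)
From HB Require Import structures.
From mathcomp Require Import all_boot all_order all_algebra.
From Stdlib Require Import ClassicalEpsilon.
Set Implicit Arguments. Unset Strict Implicit. Unset Printing Implicit Defensive.
Import Order.TTheory GRing.Theory Num.Theory.
Local Open Scope ring_scope.

(* [vge v x n] : "v(x) >= n", with the convention v(0) = +oo. *)
Definition vge (F : fieldType) (v : F -> int) (x : F) (n : int) : bool :=
  (x == 0) || (n <= v x).

(* (F, v) is a complete discretely valued field of characteristic 0 with
   valuation normalised by v(p) = 1 and residue field F_p.  Such a valued
   field is isomorphic to (Q_p, p-adic valuation). *)
Definition is_Qp (p : nat) (F : fieldType) (v : F -> int) : Prop :=
  [/\ (p%:R : F) != 0 /\ v p%:R = 1,
      (forall x y : F, x != 0 -> y != 0 -> v (x * y) = v x + v y),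
      (forall (x y : F) (n : int), vge v x n -> vge v y n -> vge v (x + y) n),
      (forall x : F, vge v x 0 -> exists2 d : nat, (d < p)%N & vge v (x - d%:R) 1)
    & (forall u : nat -> F,
        (forall m : nat, exists N, forall i j, (N <= i)%N -> (N <= j)%N ->
            vge v (u i - u j) m%:Z) ->
        exists l : F, forall m : nat, exists N, forall i, (N <= i)%N ->
            vge v (u i - l) m%:Z)].

Section Meta.
Variables (p : nat) (F : fieldType) (v : F -> int).

Definition resid (x : F) : nat :=
  epsilon (inhabits 0%N) (fun d : nat => (d < p)%N /\ vge v (x - d%:R) 1).

Definition omega (x : F) : nat := resid (x / (p%:R ^ v x)).

(* Hilbert symbol (a,b) in {+1,-1}; [hilb a b = true] iff (a,b) = -1. *)
Definition hilb (a b : F) : bool :=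
  ((omega ((-1) ^ (v a * v b) * b ^ (v a) / a ^ (v b))) ^ (p.-1)./2 %% p
     == p.-1)%N.

Definition cfun (g : 'M[F]_2) : F :=
  if g ord_max ord0 != 0 then g ord_max ord0 else g ord_max ord_max.

(* metaplectic cocycle sigma(g1,g2) in mu_2 = {+1,-1}, coded as bool (true = -1) *)
Definition sigma (g1 g2 : 'M[F]_2) : bool :=
  hilb (cfun (g1 *m g2) / cfun g1) (\det g1 * cfun (g1 *m g2) / cfun g2).

(* Elements of the metaplectic cover: pairs (g, z), g invertible, z : bool
   coding (-1)^z; product (g1,z1)(g2,z2) = (g1 g2, z1 z2 sigma(g1,g2)). *)
Definition mmul (x y : 'M[F]_2 * bool) : 'M[F]_2 * bool :=
  (x.1 *m y.1, x.2 (+) y.2 (+) sigma x.1 y.1).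

(* Principal congruence subgroup K_m = 1 + p^m M_2(Z_p); these (times {+1})
   form a basis of neighbourhoods of the identity of G~ = G x mu_2. *)
Definition congr_sub (m : nat) (g : 'M[F]_2) : Prop :=
  g \in unitmx /\ forall i j, vge v (g i j - (i == j)%:R) m%:Z.

Variables (k : fieldType) (n : nat).

(* rho : G~ -> GL_n(k), defined on pairs with invertible first component *)
Definition is_rep (rho : 'M[F]_2 -> bool -> 'M[k]_n) : Prop :=
  rho 1%:M false = 1%:M /\
  forall (g1 g2 : 'M[F]_2) (z1 z2 : bool), g1 \in unitmx -> g2 \in unitmx ->
    rho (mmul (g1, z1) (g2, z2)).1 (mmul (g1, z1) (g2, z2)).2
      = rho g1 z1 *m rho g2 z2.

(* smooth: the stabiliser of every vector is open, i.e. contains some K_m x {1} *)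
Definition is_smooth (rho : 'M[F]_2 -> bool -> 'M[k]_n) : Prop :=
  forall w : 'cV[k]_n, exists2 m : nat, (0 < m)%N &
    forall g, congr_sub m g -> rho g false *m w = w.

(* genuine: mu_2 acts through the nontrivial character iota *)
Definition is_genuine (rho : 'M[F]_2 -> bool -> 'M[k]_n) : Prop :=
  rho 1%:M true = - 1%:M.

End Meta.

(* Main.v *)
Require Import Defs.
From mathcomp Require Import all_boot all_order all_algebra all_field.
From mathcomp Require Import zify ring lra.
From Stdlib Require Import ClassicalEpsilon.
Set Implicit Arguments. Unset Strict Implicit. Unset Printing Implicit Defensive.
Import Order.TTheory GRing.Theory Num.Theory.
Local Open Scope ring_scope.
Section V.
Variables (p : nat) (F : fieldType) (v : F -> int).
Hypothesis pr : prime p.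
Hypothesis hQ : is_Qp p v.

Lemma vmul x y : x != 0 -> y != 0 -> v (x * y) = v x + v y.
Proof. by case: hQ => _ H _ _ _; apply: H. Qed.

Lemma vge_add x y n : vge v x n -> vge v y n -> vge v (x + y) n.
Proof. by case: hQ => _ _ H _ _; apply: H. Qed.

Lemma vP : (p%:R : F) != 0 /\ v p%:R = 1.
Proof. by case: hQ => H _ _ _ _. Qed.

Lemma v1 : v 1 = 0.
Proof.
have := vmul (oner_neq0 F) (oner_neq0 F); rewrite mulr1 => H.
have : v 1 + v 1 = v 1 + 0 by rewrite addr0 -H.
by move/addrI.
Qed.

Lemma vN1 : v (-1) = 0.
Proof.
have h : (-1 : F) != 0 by rewrite oppr_eq0 oner_neq0.
have := vmul h h; rewrite mulrNN mulr1 v1 => H.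
have : v (-1) * 2 = 0 by rewrite mulr2n mulrDr mulr1 -H.
by move/eqP; rewrite mulf_eq0 => /orP [/eqP //|].
Qed.

Lemma vN x : v (- x) = v x.
Proof.
have [->|hx] := eqVneq x 0; first by rewrite oppr0.
have h : (-1 : F) != 0 by rewrite oppr_eq0 oner_neq0.
by rewrite -mulN1r vmul // vN1 add0r.
Qed.

Lemma vV x : x != 0 -> v x^-1 = - v x.
Proof.
move=> hx; have hi : x^-1 != 0 by rewrite invr_eq0.
have := vmul hx hi; rewrite mulfV // v1 => /eqP; rewrite eq_sym addr_eq0.
by move/eqP => ->; rewrite opprK.
Qed.

Lemma vge0 n : vge v 0 n.
Proof. by rewrite /vge eqxx. Qed.

Lemma vgeN x n : vge v x n -> vge v (- x) n.
Proof. by rewrite /vge oppr_eq0 vN. Qed.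

Lemma vge_sub x y n : vge v x n -> vge v y n -> vge v (x - y) n.
Proof. by move=> hx hy; apply: vge_add => //; apply: vgeN. Qed.

Lemma vge_mul x y a b : vge v x a -> vge v y b -> vge v (x * y) (a + b).
Proof.
rewrite /vge; have [->|hx] := eqVneq x 0; first by rewrite mul0r eqxx.
have [->|hy] := eqVneq y 0; first by rewrite mulr0 eqxx.
by rewrite /= mulf_eq0 (negbTE hx) (negbTE hy) /= vmul // => ha hb; apply: lerD.
Qed.

Lemma vge_le x a b : a <= b -> vge v x b -> vge v x a.
Proof. by rewrite /vge => hab /orP [->//|h]; rewrite (le_trans hab h) orbT. Qed.

Lemma vge_nat d : vge v (d%:R) 0.
Proof.
elim: d => [|d IH]; first exact: vge0.
by rewrite -addn1 natrD; apply: vge_add => //; rewrite /vge v1 lexx orbT.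
Qed.

Lemma vge_p : vge v (p%:R) 1.
Proof. by rewrite /vge (proj2 vP) lexx orbT. Qed.

Lemma unit_digit d : (0 < d < p)%N -> ~ vge v (d%:R) 1.
Proof.
case/andP => d0 dp hd.
case: (egcdnP p d0) => km kn E _.
have : gcdn d p = 1%N.
  apply/eqP; rewrite -/(coprime d p) coprime_sym prime_coprime //.
  by apply/negP => /(dvdn_leq d0); rewrite leqNgt dp.
move=> g; rewrite g in E.
have E' : (1 : F) = (km%:R * d%:R) - (kn%:R * p%:R).
  by rewrite -!natrM E natrD addrAC subrr add0r.
have : vge v (1 : F) 1.
  rewrite E'; apply: vge_sub.
    by have := vge_mul (vge_nat km) hd; rewrite add0r.
  by have := vge_mul (vge_nat kn) vge_p; rewrite add0r.
by rewrite /vge oner_eq0 v1.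
Qed.

Lemma v_digit d : (0 < d < p)%N -> (d%:R : F) != 0 /\ v d%:R = 0.
Proof.
move=> hd; have := unit_digit hd; have := vge_nat d; rewrite /vge.
case: eqP => //= h00 h0 h1; split; first by apply/eqP.
have h2 : ~~ (1 <= v d%:R) by apply/negP => h; apply: h1; rewrite h ?orbT.
lia.
Qed.

Lemma digit_uniq x d d' : (d < p)%N -> (d' < p)%N ->
  vge v (x - d%:R) 1 -> vge v (x - d'%:R) 1 -> d = d'.
Proof.
wlog lt : d d' / (d' <= d)%N.
  move=> W hd hd' h h'; case: (leqP d' d) => c; first exact: W.
  by symmetry; apply: W => //; apply: ltnW.
move=> hd hd' h h'; apply/eqP; rewrite eqn_leq lt andbT leqNgt; apply/negP => c.
have e : (x - d'%:R) - (x - d%:R) = (d - d')%:R :> F by rewrite natrB //; ring.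
have := vge_sub h' h; rewrite e => H.
apply: (@unit_digit (d - d')) => //.
by apply/andP; split; [rewrite subn_gt0 | apply: leq_ltn_trans hd; apply: leq_subr].
Qed.

Lemma resid_eq x d : (d < p)%N -> vge v (x - d%:R) 1 -> resid p v x = d.
Proof.
move=> hd h; rewrite /resid.
have := @epsilon_spec nat (inhabits 0%N) (fun d : nat => (d < p)%N /\ vge v (x - d%:R) 1).
case; first by exists d.
by move=> h1 h2; apply: (digit_uniq h1 hd h2 h).
Qed.

End V.
Lemma nonres p : prime p -> odd p ->
  exists r, [/\ (0 < r)%N, (r < p)%N & (r ^ (p.-1)./2 %% p = p.-1)%N].
Proof.
move=> pr op.
have p3 : (2 < p)%N by move: op (prime_gt1 pr); case: (p) => [|[|[|q]]].
set h := (p.-1)./2.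
have hp : (h.*2 = p.-1)%N.
  by rewrite /h -(odd_halfK op) half_double.
have h0 : (0 < h)%N by move: hp p3; rewrite -muln2; lia.
have : ~~ [forall x : 'F_p, (x != 0) ==> (x ^+ h == 1)].
  apply/negP => /forallP H.
  pose q : {poly 'F_p} := 'X^h - 1.
  have q0 : q != 0 by rewrite -size_poly_eq0 size_Xn_sub_1.
  have := @max_poly_roots _ q (enum (predC1 (0 : 'F_p))) q0.
  rewrite enum_uniq size_Xn_sub_1 // -cardE cardC1 card_Fp //.
  have -> : all (root q) (enum (predC1 0)).
    apply/allP => y; rewrite mem_enum /= => y0.
    have := H y; rewrite inE in y0; rewrite y0 /= => /eqP e.
    by rewrite /root /q !hornerE e subrr.
  move=> /(_ isT isT); lia.
rewrite negb_forall => /existsP [x]; rewrite negb_imply => /andP [x0 xh].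
have xp : x ^+ p.-1 = 1.
  have e := expf_card x; rewrite card_Fp // in e.
  have : x * x ^+ p.-1 = x * 1 by rewrite -exprS prednK ?prime_gt0 // e mulr1.
  by apply: mulfI.
have xm : x ^+ h = -1.
  have : (x ^+ h) ^+ 2 == 1 by rewrite -exprM muln2 hp xp.
  by rewrite sqrf_eq1 (negbTE xh) => /eqP.
have vx : (val x < p)%N by have := ltn_ord x; rewrite [in X in (_ < X)%N]Fp_cast.
have ex : x = (val x)%:R.
  by apply: val_inj; rewrite /= val_Fp_nat // modn_small.
exists (val x); split => //.
  rewrite lt0n; apply/negP => /eqP e; move: x0; by rewrite ex e.
have := congr1 val xm; rewrite {1}ex -natrX /= => e; rewrite -val_Fp_nat // e.
rewrite Fp_cast // (modn_small (prime_gt1 pr)) subn1 modn_small //.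
by rewrite prednK ?prime_gt0.
Qed.
Section M.
Variable F : fieldType.
Definition mk (a b c d : F) : 'M[F]_2 :=
  \matrix_(i < 2, j < 2) if (i == 0 :> nat) then (if (j == 0 :> nat) then a else b)
                          else (if (j == 0 :> nat) then c else d).

Lemma mulmk a b c d a' b' c' d' :
  mk a b c d *m mk a' b' c' d' =
  mk (a*a'+b*c') (a*b'+b*d') (c*a'+d*c') (c*b'+d*d').
Proof.
apply/matrixP => i j; rewrite !mxE !big_ord_recr big_ord0 /= !mxE add0r.
by case: i => [[|[|i]] Hi] //; case: j => [[|[|j]] Hj].
Qed.

Lemma mk1 : 1%:M = mk 1 0 0 1.
Proof.
apply/matrixP => i j; rewrite !mxE.
by case: i => [[|[|i]] Hi] //; case: j => [[|[|j]] Hj].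
Qed.

Lemma detdg a d : \det (mk a 0 0 d) = a * d.
Proof.
have -> : mk a 0 0 d = diag_mx (\row_(j < 2) if (j == 0 :> nat) then a else d).
  apply/matrixP => i j; rewrite !mxE.
  by case: i => [[|[|i]] Hi] //; case: j => [[|[|j]] Hj].
by rewrite det_diag !big_ord_recr big_ord0 /= !mxE mul1r.
Qed.

Lemma cfun_dg a d : cfun (mk a 0 0 d) = d.
Proof. by rewrite /cfun !mxE /= eqxx. Qed.

Lemma mk_unit a b c d a' b' c' d' :
  mk a b c d *m mk a' b' c' d' = 1%:M -> mk a b c d \in unitmx.
Proof. by move/mulmx1_unit => []. Qed.
End M.

Theorem lemma4p5 (p : nat) (F : fieldType) (v : F -> int)
  (k : closedFieldType) (n : nat) (rho : 'M[F]_2 -> bool -> 'M[k]_n) :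
  prime p -> odd p -> is_Qp p v -> p \in [pchar k] ->
  is_rep p v rho -> is_smooth v rho -> is_genuine rho ->
  n = 0%N.
Proof.
move=> pr op hQ pk [r1 rm] sm gen.
have [//|n0] := posnP n; exfalso.
have rm' g1 g2 z1 z2 : g1 \in unitmx -> g2 \in unitmx ->
    rho (g1 *m g2) (z1 (+) z2 (+) sigma p v g1 g2) = rho g1 z1 *m rho g2 z2.
  by move=> u1 u2; have := rm g1 g2 z1 z2 u1 u2.
have [M HM] : exists M, forall g, congr_sub v M g -> rho g false = 1%:M.
  have K : forall s : seq 'I_n, exists M, forall g, congr_sub v M g ->
      forall j, j \in s -> col j (rho g false) = col j 1%:M.
    elim => [|j s [M IH]]; first by exists 0%N.
    have [m _ Hm] := sm (delta_mx j 0).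
    exists (maxn m M) => g [gu gc] j'; rewrite inE => /orP [/eqP ->|js].
      rewrite !colE mul1mx Hm //; split => // a b.
      by apply: (vge_le _ (gc a b)); rewrite lez_nat leq_maxl.
    apply: IH => //; split => // a b.
    by apply: (vge_le _ (gc a b)); rewrite lez_nat leq_maxr.
  have [M HM] := K (enum 'I_n); exists M => g hg.
  apply/matrixP => i j; have := HM g hg j; rewrite mem_enum => /(_ isT) /matrixP /(_ i 0).
  by rewrite !mxE.
pose Hs g := g \in unitmx /\ exists s, rho g s = 1%:M.
have HK g : congr_sub v M g -> Hs g.
  by move=> hg; split; [case: hg | exists false; apply: HM].
have Hmul a b : Hs a -> Hs b -> Hs (a *m b).
  move=> [ua [sa ra]] [ub [sb rb]]; split; first by rewrite unitmx_mul ua ub.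
  by exists (sa (+) sb (+) sigma p v a b); rewrite rm' // ra rb mulmx1.
have Hconj g t t' : Hs g -> t *m t' = 1%:M -> Hs (t *m g *m t').
  move=> [ug [s rg]] tt; have [ut ut'] := mulmx1_unit tt.
  have e1 : rho t false *m rho t' (sigma p v t t') = 1%:M.
    by rewrite -rm' // tt addbb.
  split; first by rewrite !unitmx_mul ut ug ut'.
  exists ((false (+) s (+) sigma p v t g) (+) sigma p v t t' (+) sigma p v (t *m g) t').
  by rewrite rm' ?unitmx_mul ?ut ?ug // rm' // rg mulmx1.
have Kmk a b c d : vge v (a - 1) M -> vge v b M -> vge v c M -> vge v (d - 1) M ->
    mk a b c d \in unitmx -> congr_sub v M (mk a b c d).
  move=> ha hb hc hd u; split => // i j; rewrite !mxE.
  by case: i => [[|[|i]] Hi] //; case: j => [[|[|j]] Hj] //=; rewrite ?subr0.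
set P : F := p%:R.
have [P0 vP1] : P != 0 /\ v P = 1 := vP hQ.
have vPn j : P ^+ j != 0 /\ v (P ^+ j) = j%:Z.
  elim: j => [|j [IH1 IH2]]; first by rewrite expr0 oner_neq0 (v1 hQ).
  rewrite exprS mulf_eq0 negb_or P0 IH1 (vmul hQ) // vP1 IH2; split => //.
have big x : x != 0 -> exists a : F, a != 0 /\ vge v (a * x) M.
  move=> x0; exists (P ^+ `|M%:Z - v x|%N); have [h1 h2] := vPn `|M%:Z - v x|%N.
  split => //; rewrite /vge mulf_eq0 (negbTE h1) (negbTE x0) /= (vmul hQ) // h2.
  lia.
have HU x : Hs (mk 1 x 0 1).
  have [->|x0] := eqVneq x 0.
    apply: HK; apply: Kmk; rewrite ?subrr; try exact: vge0.
    by apply: (@mk_unit _ _ _ _ _ 1 0 0 1); rewrite mulmk mk1; congr mk; ring.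
  have [a [a0 ha]] := big x x0.
  have -> : mk 1 x 0 1 = mk a^-1 0 0 1 *m mk 1 (a * x) 0 1 *m mk a 0 0 1.
    by rewrite !mulmk; congr mk; field.
  apply: Hconj; last by rewrite mulmk mk1; congr mk; field.
  apply: HK; apply: Kmk; rewrite ?subrr; try exact: vge0; first exact: ha.
  by apply: (@mk_unit _ _ _ _ _ 1 (- (a * x)) 0 1); rewrite mulmk mk1; congr mk; ring.
have HL x : Hs (mk 1 0 x 1).
  have [->|x0] := eqVneq x 0.
    apply: HK; apply: Kmk; rewrite ?subrr; try exact: vge0.
    by apply: (@mk_unit _ _ _ _ _ 1 0 0 1); rewrite mulmk mk1; congr mk; ring.
  have [a [a0 ha]] := big x x0.
  have -> : mk 1 0 x 1 = mk a 0 0 1 *m mk 1 0 (a * x) 1 *m mk a^-1 0 0 1.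
    by rewrite !mulmk; congr mk; field.
  apply: Hconj; last by rewrite mulmk mk1; congr mk; field.
  apply: HK; apply: Kmk; rewrite ?subrr; try exact: vge0; first exact: ha.
  by apply: (@mk_unit _ _ _ _ _ 1 0 (- (a * x)) 1); rewrite mulmk mk1; congr mk; ring.
have HT t : t != 0 -> Hs (mk t 0 0 t^-1).
  move=> t0.
  have -> : mk t 0 0 t^-1 = mk 1 (t - 1) 0 1 *m mk 1 0 1 1 *m mk 1 (t^-1 - 1) 0 1 *m mk 1 0 (- t) 1.
    by rewrite !mulmk; congr mk; field.
  exact: Hmul _ _ (Hmul _ _ (Hmul _ _ (HU _) (HL _)) (HU _)) (HL _).
have [r [r0 rp hr]] := nonres pr op.
have p2 : (2 < p)%N by apply: odd_gt2 => //; apply: prime_gt1.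
set R : F := r%:R.
have [R0 vR] : R != 0 /\ v R = 0 by apply: (v_digit pr hQ); rewrite r0 rp.
have Ri0 : R^-1 != 0 by rewrite invr_eq0.
have vRi : v R^-1 = 0 by rewrite (vV hQ) // vR oppr0.
have om1 : omega p v 1 = 1%N.
  rewrite /omega (v1 hQ) expr0z divr1; apply: (resid_eq pr hQ); first exact: prime_gt1.
  by rewrite subrr; apply: vge0.
have omR : omega p v R = r.
  rewrite /omega vR expr0z divr1; apply: (resid_eq pr hQ) => //.
  by rewrite subrr; apply: vge0.
have hil1 : hilb p v 1 R^-1 = false.
  rewrite /hilb (v1 hQ) vRi mul0r !expr0z mulr1 divr1 om1 exp1n modn_small.
    by apply/negbTE; rewrite neq_ltn; apply/orP; left; rewrite -ltnS prednK ?prime_gt0.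
  exact: prime_gt1.
have hilR : hilb p v R^-1 P = true.
  rewrite /hilb vRi vP1 mul0r !expr0z expr1z mul1r div1r invrK omR.
  by apply/eqP.
pose g1 := mk P 0 0 1.
pose g2 := mk R 0 0 R^-1.
pose G := mk (P * R) 0 0 R^-1.
pose G' := mk (P * R)^-1 0 0 R.
have e12 : g1 *m g2 = G by rewrite mulmk; congr mk; ring.
have e21 : g2 *m g1 = G by rewrite mulmk; congr mk; ring.
have eGG : G *m G' = 1%:M.
  by rewrite mulmk mk1; congr mk; field; try (apply/andP; split).
have [uG uG'] := mulmx1_unit eGG.
have u1 : g1 \in unitmx.
  by apply: (@mk_unit _ _ _ _ _ P^-1 0 0 1); rewrite mulmk mk1; congr mk; field.
have [u2 [s rs]] := HT R R0.
have s12 : sigma p v g1 g2 = true.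
  rewrite /sigma e12 !cfun_dg detdg.
  have -> : R^-1 / 1 = R^-1 by rewrite divr1.
  have -> : P * 1 * R^-1 / R^-1 = P by rewrite mulr1 mulfK.
  exact: hilR.
have s21 : sigma p v g2 g1 = false.
  rewrite /sigma e21 !cfun_dg detdg.
  have -> : R^-1 / R^-1 = 1 by rewrite divff.
  have -> : R * R^-1 * R^-1 / 1 = R^-1 by rewrite divr1 mulfV // mul1r.
  exact: hil1.
have A := rm' g1 g2 false s u1 u2.
have B := rm' g2 g1 s false u2 u1.
rewrite e12 s12 rs mulmx1 in A; rewrite e21 s21 rs mul1mx -A in B.
have C1 := rm' G G' s (s (+) sigma p v G G') uG uG'.
have C2 := rm' G G' (false (+) s (+) true) (s (+) sigma p v G G') uG uG'.
rewrite !addbF in B; rewrite -B -C1 eGG in C2.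
have : rho 1%:M false = rho 1%:M true.
  by move: C2; case: (s); case: (sigma p v G G').
rewrite r1 gen => /matrixP /(_ (Ordinal n0) (Ordinal n0)); rewrite !mxE eqxx /=.
move/eqP; rewrite -subr_eq0 opprK => /eqP h2.
have hp0 := pcharf0 pk.
have := odd_double_half p; rewrite op => ep.
have : (p%:R : k) = 1 by rewrite -ep natrD -muln2 natrM -[2%N]/(1 + 1)%N natrD h2 mulr0 addr0.
by rewrite hp0 => /eqP; rewrite eq_sym oner_eq0.
Qed.
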